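(* Let $(R,pR)$ be a discrete valuation domain with valuation $\mathsf{v}$ and finite residue field. Let $f\in R[x]$ be a primitive, non-constant polynomial with irreducible divisor set $\mathcal{P}$ and write $f=\prod_{g\in\mathcal{P}}g^{m_g}$ with multiplicity vector $\mathbf{m}=(m_g)_{g\in\mathcal{P}}\in\mathbb{N}^{\mathcal{P}}$. Assume $n:=\mathsf{v}(\operatorname{d}(f))\in\mathbb{N}$ (so $n\ge 1$) and set $F=\frac{f}{p^n}\in\operatorname{Int}(R)$. If $\operatorname{fdk}(f)\neq\mathbf{0}$, then $F$ is not absolutely irreducible in $\operatorname{Int}(R)$. More precisely, if $F$ is irreducible in $\operatorname{Int}(R)$ and $\mathbf{0}\neq\mathbf{v}\in\operatorname{fdk}(f)\cap\mathbb{Z}^{\mathcal{P}}$, then $F^j$ factors non-uniquely in $\operatorname{Int}(R)$ for every $j\in\mathbb{N}$ with $$j\ \ge\ (n+1)\left(\left\lceil\Big\|\tfrac{\mathbf{v}^+}{\mathbf{m}}\Big\|_\infty\right\rceil+\left\lceil\Big\|\tfrac{\mathbf{v}^-}{\mathbf{m}}\Big\|_\infty\right\rceil\right).$$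
   Context: $(R,pR)$ is a discrete valuation domain with valuation $\mathsf{v}$, finite residue field, and quotient field $K$. $\operatorname{Int}(R)=\{F\in K[x]\mid F(R)\subseteq R\}$; its units are the units of $R$. For $f\in R[x]$, the fixed divisor $\operatorname{d}(f)$ is $\gcd(f(a)\mid a\in R)$, so $\mathsf{v}(\operatorname{d}(f))=\min_{a\in R}\mathsf{v}(f(a))$. A polynomial in $R[x]$ is primitive if its coefficients generate $R$ as an ideal. An irreducible divisor set $\mathcal{P}$ of $f$ is a set of representatives of the associate classes (in $R[x]$) of the irreducible divisors of $f$ in $R[x]$. For $a\in R$ let $\mathsf{v}_{\mathcal{P}}(a)=(\mathsf{v}(g(a)))_{g\in\mathcal{P}}$. The set of fixed divisor witnesses is $\mathcal{W}(f)=\{a\in R\mid \mathsf{v}(f(a))=\mathsf{v}(\operatorname{d}(f))\}$. The fixed divisor kernel is the $\mathbb{Q}$-subspace $$\operatorname{fdk}(f)=\Big\{\mathbf{u}=(u_g)_{g\in\mathcal{P}}\in\mathbb{Q}^{\mathcal{P}}\ \Big|\ \forall a\in\mathcal{W}(f):\ \textstyle\sum_{g\in\mathcal{P}}u_g\,\mathsf{v}(g(a))=0\Big\}.$$ For $\mathbf{u}\in\mathbb{Q}^{\mathcal{P}}$: $\mathbf{u}^+=\max(\mathbf{u},\mathbf{0})$ and $\mathbf{u}^-=-\min(\mathbf{u},\mathbf{0})$ componentwise; $\|\mathbf{u}\|_\infty=\max_g|u_g|$; for $\mathbf{w}$ with all entries nonzero, $\frac{\mathbf{u}}{\mathbf{w}}=(u_g/w_g)_{g\in\mathcal{P}}$.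 In a commutative ring, two factorizations into irreducibles $a_1\cdots a_k=b_1\cdots b_l$ are essentially the same if $k=l$ and after reindexing $a_i$ and $b_i$ are associated; an element ''factors non-uniquely'' if it has two essentially different factorizations into irreducibles. An irreducible $r$ is absolutely irreducible if for every $k\in\mathbb{N}$ every factorization of $r^k$ is essentially the same as $r\cdots r$. *)

(* Defs.v *)
From HB Require Import structures.
From mathcomp Require Import all_boot all_order all_algebra.
Set Implicit Arguments. Unset Strict Implicit. Unset Printing Implicit Defensive.
Import Order.TTheory GRing.Theory Num.Theory.
Local Open Scope ring_scope.

(* A discrete valuation domain R is modelled as the valuation ring of a
   discrete valuation v : K^* -> Z on its quotient field K, with uniformizer p
   (v p = 1, so pR is the maximal ideal).  v 0 is irrelevant (v(0) = oo is
   handled by explicit "!= 0" side conditions). *)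
Section DVR.
Variable K : fieldType.
Variable v : K -> int.

Definition inR (x : K) : bool := (x == 0) || (0 <= v x).

Record is_dvr (p : K) : Prop := {
  dvr_mul : forall x y, x != 0 -> y != 0 -> v (x * y) = v x + v y;
  dvr_add : forall x y, x != 0 -> y != 0 -> x + y != 0 ->
              (v x <= v (x + y)) || (v y <= v (x + y));
  dvr_p_neq0 : p != 0;
  dvr_vp : v p = 1;
  dvr_res_fin : exists s : seq K, all inR s /\
      forall x, inR x -> exists2 r, r \in s & exists2 y, inR y & x - r = p * y
}.

Definition polyR (f : {poly K}) : Prop := forall i, inR f`_i.
Definition intR (F : {poly K}) : Prop := forall a, inR a -> inR F.[a].

(* the coefficients of f generate R as an ideal *)
Definition primitiveR (f : {poly K}) : Prop :=
  exists c : nat -> K, (forall i, inR (c i)) /\ \sum_(i < size f) c i * f`_i = 1.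

(* v(d(f)) = n, using v(d(f)) = min_{a in R} v(f(a)) *)
Definition fd_val (f : {poly K}) (n : nat) : Prop :=
  (exists2 a, inR a & f.[a] != 0 /\ v f.[a] = n%:Z) /\
  (forall a, inR a -> f.[a] != 0 -> n%:Z <= v f.[a]).

Definition fd_witness (f : {poly K}) (n : nat) (a : K) : Prop :=
  inR a /\ f.[a] != 0 /\ v f.[a] = n%:Z.

Section Fact.
Variable S : {poly K} -> Prop.
Definition unitS (u : {poly K}) := S u /\ exists2 w, S w & u * w = 1.
Definition assocS (a b : {poly K}) := exists2 u, unitS u & a = u * b.
Definition irredS (r : {poly K}) :=
  [/\ S r, r != 0, ~ unitS r &
      forall a b, S a -> S b -> r = a * b -> unitS a \/ unitS b].
Definition dvdS (g f : {poly K}) := exists2 h, S h & f = g * h.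
Definition factorizationS (x : {poly K}) (s : seq {poly K}) :=
  (forall r, r \in s -> irredS r) /\ \prod_(r <- s) r = x.
Definition ess_sameS (s t : seq {poly K}) :=
  size s = size t /\ exists t', perm_eq t t' /\
    forall i, (i < size s)%N -> assocS (nth 0 s i) (nth 0 t' i).
Definition factors_nonuniquely (x : {poly K}) :=
  exists s t, [/\ factorizationS x s, factorizationS x t & ~ ess_sameS s t].
Definition abs_irredS (r : {poly K}) :=
  irredS r /\ forall (k : nat) (s : seq {poly K}),
    factorizationS (r ^+ k) s -> ess_sameS s (nseq k r).
End Fact.

Definition irr_divisor_set (k : nat) (P : 'I_k -> {poly K}) (f : {poly K}) :=
  [/\ forall i, irredS polyR (P i) /\ dvdS polyR (P i) f,
      forall i j, assocS polyR (P i) (P j) -> i = j &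
      forall g, irredS polyR g -> dvdS polyR g f -> exists i, assocS polyR g (P i)].

Definition in_fdk (f : {poly K}) (n : nat) (k : nat) (P : 'I_k -> {poly K})
    (u : 'I_k -> rat) : Prop :=
  forall a, fd_witness f n a -> \sum_(i < k) u i * (v (P i).[a])%:~R = 0.

End DVR.

Definition sup_norm (k : nat) (u : 'I_k -> rat) : rat :=
  \big[Num.max/0]_(i < k) `|u i|.
Definition vpos_div (k : nat) (w : 'I_k -> int) (m : 'I_k -> nat) (i : 'I_k) : rat :=
  (Num.max (w i) 0)%:~R / (m i)%:R.
Definition vneg_div (k : nat) (w : 'I_k -> int) (m : 'I_k -> nat) (i : 'I_k) : rat :=
  (Num.max (- w i) 0)%:~R / (m i)%:R.
Definition fdk_bound (n k : nat) (w : 'I_k -> int) (m : 'I_k -> nat) : int :=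
  (n.+1)%:Z * (Num.ceil (sup_norm (vpos_div w m)) + Num.ceil (sup_norm (vneg_div w m))).

(* Main.v *)
Require Import Defs.
From HB Require Import structures.
From mathcomp Require Import all_boot all_order all_algebra.
From mathcomp Require Import zify ring lra.
Import Order.TTheory GRing.Theory Num.Theory.
Set Implicit Arguments. Unset Strict Implicit. Unset Printing Implicit Defensive.
Local Open Scope ring_scope.
From Stdlib Require Import Classical_Prop.

Lemma bigmax_ge (I : eqType) (r : seq I) (F : I -> rat) g :
  g \in r -> F g <= \big[Num.max/0]_(i <- r) F i.
Proof.
elim: r => [|a r IH] //; rewrite inE big_cons le_max => /orP[/eqP <-|/IH ->];
  by rewrite ?lexx ?orbT.
Qed.

Lemma bigmax_ge0 (I : Type) (r : seq I) (F : I -> rat) :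
  0 <= \big[Num.max/0]_(i <- r) F i.
Proof. by elim: r => [|a r IH]; rewrite ?big_nil // big_cons le_max IH orbT. Qed.

Lemma sup_ge k (u : 'I_k -> rat) g : u g <= sup_norm u.
Proof.
apply: le_trans (ler_norm _) _; rewrite /sup_norm.
by apply: (bigmax_ge (fun i => `|u i|)); rewrite mem_index_enum.
Qed.

Lemma ceil_sup_ge0 k (u : 'I_k -> rat) : 0 <= Num.ceil (sup_norm u).
Proof.
rewrite ceil_ge0; apply: lt_le_trans (bigmax_ge0 _ _); by [].
Qed.

Lemma ceil_bound k (z : 'I_k -> int) (m : 'I_k -> nat) g : (0 < m g)%N ->
  z g <= Num.ceil (sup_norm (fun i => (z i)%:~R / (m i)%:R)) * (m g)%:Z.
Proof.
move=> mg; set c := Num.ceil _.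
have h1 := sup_ge (fun i => (z i)%:~R / (m i)%:R) g.
have h2 := ceil_ge (sup_norm (fun i => (z i)%:~R / (m i)%:R)).
have := le_trans h1 h2; rewrite ler_pdivrMr ?ltr0n // -/c => h.
by rewrite -(ler_int rat) intrM.
Qed.

Section UF.
Variable K : fieldType.

Lemma irr_dvd_mul (q a b : {poly K}) : irreducible_poly q -> q %| a * b -> q %| a \/ q %| b.
Proof.
move=> iq h; have [qb|nqb] := boolP (q %| b); first by right.
left; have cq : coprimep q b by rewrite irreducible_poly_coprime.
by rewrite -(Gauss_dvdpl _ cq).
Qed.

Lemma irr_ndvd1 (q : {poly K}) : irreducible_poly q -> ~~ (q %| 1).
Proof. by move=> [sq _]; rewrite dvdp1; apply: contraTN sq => /eqP ->. Qed.

Lemma irr_dvd_exp (q r : {poly K}) n : irreducible_poly q -> q %| r ^+ n -> (0 < n)%N /\ q %| r.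
Proof.
move=> iq; elim: n => [|n IH]; first by rewrite expr0 (negbTE (irr_ndvd1 iq)).
rewrite exprS => /(irr_dvd_mul iq)[] // /IH[]//.
Qed.

Lemma irr_dvd_prod (q : {poly K}) (I : eqType) (r : seq I) (P : I -> {poly K}) (e : I -> nat) :
  irreducible_poly q -> q %| \prod_(i <- r) P i ^+ e i -> exists2 i, i \in r & (0 < e i)%N /\ q %| P i.
Proof.
move=> iq; elim: r => [|a r IH]; first by rewrite big_nil (negbTE (irr_ndvd1 iq)).
rewrite big_cons => /(irr_dvd_mul iq)[/(irr_dvd_exp iq) h| /IH[i ir h]].
  by exists a; rewrite ?mem_head.
by exists i; rewrite ?inE ?ir ?orbT.
Qed.

Variable k : nat.
Variable P : 'I_k -> {poly K}.
Hypothesis Pirr : forall i, irreducible_poly (P i).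
Hypothesis Pinj : forall i j, P i %| P j -> i = j.

Definition pw (a : 'I_k -> nat) := \prod_(i < k) P i ^+ a i.

Definition dec (a : 'I_k -> nat) i := fun j => if j == i then (a j).-1 else a j.

Lemma pw_dec a i : (0 < a i)%N -> pw a = P i * pw (dec a i).
Proof.
move=> ai; rewrite /pw (bigD1 i) //= [X in _ = _ * X](bigD1 i) //= /dec eqxx.
rewrite mulrA -exprS prednK //; congr (_ * _); apply: eq_bigr => j /negbTE ->.
by [].
Qed.

Lemma P_neq0 i : P i != 0.
Proof. by apply: irredp_neq0; exact: Pirr. Qed.

Lemma uf_step a b c i : c != 0 -> (0 < a i)%N -> pw a = c *: pw b ->
  (0 < b i)%N /\ pw (dec a i) = c *: pw (dec b i).
Proof.
move=> c0 ai e.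
have : P i %| pw b by rewrite -(dvdpZr _ _ c0) -e (pw_dec ai) dvdp_mulr.
case/(irr_dvd_prod (Pirr i)) => j _ [bj /Pinj ij]; subst j.
split => //; apply: (mulfI (P_neq0 i)).
by rewrite -(pw_dec ai) e (pw_dec bj) scalerAr.
Qed.

Lemma sum_dec a i : (0 < a i)%N -> (\sum_j a j = (\sum_j dec a i j).+1)%N.
Proof.
move=> ai; rewrite (bigD1 i) //= [X in _ = X.+1](bigD1 i) //= /dec eqxx.
rewrite -addSn prednK //; congr (_ + _)%N; apply: eq_bigr => j /negbTE ->.
by [].
Qed.

Lemma dec_eq a b i : (0 < a i)%N -> (0 < b i)%N -> dec a i =1 dec b i -> a =1 b.
Proof.
move=> ai bi h j; have := h j; rewrite /dec; case: eqP => // -> h'.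
by rewrite -(prednK ai) -(prednK bi) h'.
Qed.

Lemma uf a b c : c != 0 -> pw a = c *: pw b -> a =1 b.
Proof.
move=> c0 e; move: {2}(\sum_j a j + \sum_j b j)%N (leqnn (\sum_j a j + \sum_j b j)%N) => N.
elim: N a b c c0 e => [|N IH] a b c c0 e hN.
  move=> j; have : (\sum_j a j + \sum_j b j <= 0)%N by [].
  rewrite leqn0 addn_eq0 !sum_nat_eq0 => /andP[/forallP ha /forallP hb].
  by rewrite (eqP (ha j)) (eqP (hb j)).
have [i ai|na] := pickP (fun i => 0 < a i)%N.
  have [bi e'] := uf_step c0 ai e.
  apply: (dec_eq ai bi); apply: (IH _ _ _ c0 e').
  move: hN; rewrite (sum_dec ai) (sum_dec bi); lia.
have [i bi|nb] := pickP (fun i => 0 < b i)%N.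
  have ci0 : c^-1 != 0 by rewrite invr_eq0.
  have e2 : pw b = c^-1 *: pw a by rewrite e scalerA mulVf ?scale1r.
  have [ai e'] := uf_step ci0 bi e2.
  by move: (na i); rewrite ai.
by move=> j; move: (na j) (nb j) => /= /negbT; rewrite -eqn0Ngt => /eqP -> /negbT; rewrite -eqn0Ngt => /eqP ->.
Qed.

Lemma pw_mul a b : pw a * pw b = pw (fun i => a i + b i)%N.
Proof. by rewrite /pw -big_split /=; apply: eq_bigr => i _; rewrite exprD. Qed.

Lemma pw_exp a j : pw a ^+ j = pw (fun i => a i * j)%N.
Proof. by rewrite /pw -prodrXl; apply: eq_bigr => i _; rewrite exprM. Qed.

Lemma pw_ext a b : a =1 b -> pw a = pw b.
Proof. by move=> h; apply: eq_bigr => i _; rewrite h. Qed.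

End UF.
Ltac vgen v := repeat match goal with H : context [v _] |- _ => revert H end;
  repeat match goal with |- context [v ?t] => let a := fresh "va" in set a := v t; clearbody a end;
  intros.

Section Val.
Variable K : fieldType.
Variable v : K -> int.
Variable p : K.
Hypothesis Hd : is_dvr v p.
Local Ltac vlia := vgen v; lia.

Lemma vM x y : x != 0 -> y != 0 -> v (x * y) = v x + v y.
Proof. by move=> x0 y0; apply: (dvr_mul Hd x0 y0). Qed.

Lemma v1 : v 1 = 0.
Proof.
have h : v 1 = v 1 + v 1 :> int by rewrite -{1}(mulr1 (1:K)) vM ?oner_neq0.
vlia.
Qed.

Lemma vN1 : v (-1) = 0.
Proof.
have h1 : (-1 : K) != 0 by rewrite oppr_eq0 oner_neq0.
have := vM h1 h1; rewrite mulrNN mulr1 v1 => h; vlia.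
Qed.

Lemma vN x : v (- x) = v x.
Proof.
have [->|x0] := eqVneq x 0; first by rewrite oppr0.
have h1 : (-1 : K) != 0 by rewrite oppr_eq0 oner_neq0.
by rewrite -mulN1r vM // vN1 add0r.
Qed.

Lemma vV x : x != 0 -> v x^-1 = - v x.
Proof.
move=> x0; have xi : x^-1 != 0 by rewrite invr_eq0.
have := vM x0 xi; rewrite mulfV // v1 => h; vlia.
Qed.

Lemma vX x e : x != 0 -> v (x ^+ e) = e%:Z * v x.
Proof.
move=> x0; elim: e => [|e IH]; first by rewrite expr0 v1 mul0r.
rewrite exprS vM ?expf_neq0 // IH; vlia.
Qed.

Lemma vD x y : x != 0 -> y != 0 -> x + y != 0 ->
  (v x <= v (x + y)) || (v y <= v (x + y)).
Proof. by move=> x0 y0 s0; apply: (dvr_add Hd x0 y0 s0). Qed.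

Lemma inR0 : inR v 0. Proof. by rewrite /inR eqxx. Qed.
Lemma inR1 : inR v 1. Proof. by rewrite /inR v1 lexx orbT. Qed.

Lemma inRE x : x != 0 -> inR v x = (0 <= v x).
Proof. by rewrite /inR => /negbTE ->. Qed.

Lemma inRD x y : inR v x -> inR v y -> inR v (x + y).
Proof.
have [->|x0] := eqVneq x 0; first by rewrite add0r.
have [->|y0] := eqVneq y 0; first by rewrite addr0.
have [->|s0] := eqVneq (x + y) 0; first by rewrite inR0.
rewrite !inRE // => hx hy; case/orP: (vD x0 y0 s0) => h; vlia.
Qed.

Lemma inRM x y : inR v x -> inR v y -> inR v (x * y).
Proof.
have [->|x0] := eqVneq x 0; first by rewrite mul0r inR0.
have [->|y0] := eqVneq y 0; first by rewrite mulr0 inR0.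
rewrite !inRE ?mulf_neq0 // vM //; vlia.
Qed.

Lemma inRN x : inR v x -> inR v (- x).
Proof.
have [->|x0] := eqVneq x 0; first by rewrite oppr0.
by rewrite !inRE ?oppr_eq0 // vN.
Qed.

Lemma inRX x e : inR v x -> inR v (x ^+ e).
Proof. move=> h; elim: e => [|e IH]; [exact: inR1| by rewrite exprS inRM]. Qed.

Lemma inR_sum (I : Type) (r : seq I) (P : pred I) (F : I -> K) :
  (forall i, P i -> inR v (F i)) -> inR v (\sum_(i <- r | P i) F i).
Proof. by move=> h; apply: (big_ind (inR v)) => //; [exact: inR0 | exact: inRD]. Qed.

Lemma inR_prod (I : Type) (r : seq I) (P : pred I) (F : I -> K) :
  (forall i, P i -> inR v (F i)) -> inR v (\prod_(i <- r | P i) F i).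
Proof. by move=> h; apply: (big_ind (inR v)) => //; [exact: inR1 | exact: inRM]. Qed.

Definition inM (x : K) : bool := (x == 0) || (0 < v x).

Lemma inM0 : inM 0. Proof. by rewrite /inM eqxx. Qed.

Lemma inMD x y : inM x -> inM y -> inM (x + y).
Proof.
have [->|x0] := eqVneq x 0; first by rewrite add0r.
have [->|y0] := eqVneq y 0; first by rewrite addr0.
have [->|s0] := eqVneq (x + y) 0; first by rewrite inM0.
rewrite /inM (negbTE x0) (negbTE y0) (negbTE s0) /= => hx hy.
case/orP: (vD x0 y0 s0) => h; vlia.
Qed.

Lemma inMM x y : inR v x -> inM y -> inM (x * y).
Proof.
have [->|x0] := eqVneq x 0; first by rewrite mul0r inM0.
have [->|y0] := eqVneq y 0; first by rewrite mulr0 inM0.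
rewrite inRE // /inM (negbTE y0) mulf_eq0 (negbTE x0) (negbTE y0) /= vM //; vlia.
Qed.

Lemma inMMr x y : inM x -> inR v y -> inM (x * y).
Proof. by move=> h1 h2; rewrite mulrC inMM. Qed.

Lemma inM_sum (I : Type) (r : seq I) (P : pred I) (F : I -> K) :
  (forall i, P i -> inM (F i)) -> inM (\sum_(i <- r | P i) F i).
Proof. by move=> h; apply: (big_ind inM) => //; [exact: inM0 | exact: inMD]. Qed.

Lemma inM1 : ~~ inM 1.
Proof. by rewrite /inM oner_eq0 v1. Qed.

Lemma inR_notM x : inR v x -> ~~ inM x -> x != 0 /\ v x = 0.
Proof.
rewrite /inR /inM; case: eqP => //= _ h1 h2; split => //; vlia.
Qed.

Lemma unit_addM x y : x != 0 -> v x = 0 -> inM y -> x + y != 0 /\ v (x + y) = 0.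
Proof.
move=> x0 vx; have [->|y0] := eqVneq y 0; first by rewrite addr0.
rewrite /inM (negbTE y0) /= => vy.
have s0 : x + y != 0.
  apply/eqP => h; have : y = - x by rewrite -(subr0 y) -h; ring.
  by move=> hy; move: vy; rewrite hy vN vx.
split => //.
have my0 : - y != 0 by rewrite oppr_eq0.
have e : x = (x + y) + - y by ring.
have e0 : (x + y) + - y != 0 by rewrite -e.
case/orP: (vD s0 my0 e0) => h1; rewrite -e ?vN in h1;
  case/orP: (vD x0 y0 s0) => h; vlia.
Qed.


Lemma polyR_horner s x : polyR v s -> inR v x -> inR v s.[x].
Proof.
move=> hs hx; rewrite horner_coef; apply: inR_sum => i _.
by apply: inRM; [exact: hs| exact: inRX].
Qed.

Lemma intRM a b : intR v a -> intR v b -> intR v (a * b).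
Proof. by move=> ha hb x hx; rewrite hornerM inRM ?ha ?hb. Qed.

Lemma intRC c : inR v c -> intR v c%:P.
Proof. by move=> hc x _; rewrite hornerC. Qed.

Lemma intR1 : intR v 1.
Proof. by rewrite -polyC1; apply: intRC; exact: inR1. Qed.

Lemma polyRC c : inR v c -> polyR v c%:P.
Proof. by move=> hc i; rewrite coefC; case: eqP => _ //; exact: inR0. Qed.

Lemma unit_const (S : {poly K} -> Prop) u :
  (forall c, S c%:P -> inR v c) ->
  unitS S u -> exists e, [/\ u = e%:P, e != 0 & v e = 0].
Proof.
move=> hS [Su [w Sw uw]].
have u0 : u != 0 by apply: contra_eq_neq uw => ->; rewrite mul0r eq_sym oner_eq0.
have w0 : w != 0 by apply: contra_eq_neq uw => ->; rewrite mulr0 eq_sym oner_eq0.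
have := size_mul_eq1 u w; rewrite uw size_poly1 eqxx => /esym/andP[/eqP su /eqP sw].
have eu := size1_polyC (eq_leq su); have ew := size1_polyC (eq_leq sw).
set e := u`_0 in eu; set e' := w`_0 in ew.
have ee : e * e' = 1 by apply: (@polyC_inj K); rewrite polyCM -eu -ew uw.
have e0 : e != 0 by apply: contra_eq_neq ee => ->; rewrite mul0r eq_sym oner_eq0.
have e'0 : e' != 0 by apply: contra_eq_neq ee => ->; rewrite mulr0 eq_sym oner_eq0.
have he : inR v e by apply: hS; rewrite -eu.
have he' : inR v e' by apply: hS; rewrite -ew.
rewrite !inRE // in he he'.
have := vM e0 e'0; rewrite ee v1 => h.
exists e; split => //; vlia.
Qed.

Lemma unit_constC (S : {poly K} -> Prop) e :
  (forall c, inR v c -> S c%:P) -> e != 0 -> v e = 0 -> unitS S e%:P.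
Proof.
move=> hS e0 ve; split; first by apply: hS; rewrite inRE // ve.
exists (e^-1)%:P; last by rewrite -polyCM mulfV.
by apply: hS; rewrite inRE ?invr_eq0 // vV // ve.
Qed.

Lemma intR_const c : intR v c%:P -> inR v c.
Proof. by move=> h; have := h 0 inR0; rewrite hornerC. Qed.

Lemma polyR_const c : polyR v c%:P -> inR v c.
Proof. by move=> h; have := h 0%N; rewrite coefC. Qed.

Lemma unitS_intR u : unitS (intR v) u -> exists e, [/\ u = e%:P, e != 0 & v e = 0].
Proof. exact: unit_const intR_const. Qed.
Lemma unitS_polyR u : unitS (polyR v) u -> exists e, [/\ u = e%:P, e != 0 & v e = 0].
Proof. exact: unit_const polyR_const. Qed.
Lemma unitC_intR e : e != 0 -> v e = 0 -> unitS (intR v) e%:P.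
Proof. exact: unit_constC intRC. Qed.
Lemma unitC_polyR e : e != 0 -> v e = 0 -> unitS (polyR v) e%:P.
Proof. exact: unit_constC polyRC. Qed.

Lemma unitS_intRM u1 u2 : unitS (intR v) u1 -> unitS (intR v) u2 -> unitS (intR v) (u1 * u2).
Proof.
move=> /unitS_intR[e1 [-> e10 ve1]] /unitS_intR[e2 [-> e20 ve2]].
rewrite -polyCM; apply: unitC_intR; first by rewrite mulf_neq0.
by rewrite vM // ve1 ve2.
Qed.

Lemma unitS_intR1 : unitS (intR v) 1.
Proof. by rewrite -polyC1; apply: unitC_intR; [exact: oner_neq0 | exact: v1]. Qed.


Definition prim (s : {poly K}) := polyR v s /\ exists i, ~~ inM s`_i.

Lemma not_allM_ex (s : {poly K}) : ~ (forall i, inM s`_i) -> exists i, ~~ inM s`_i.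
Proof.
move=> h; have [/forallP a|] := boolP [forall i : 'I_(size s), inM s`_i].
  case: h => i; have [lt|ge] := ltnP i (size s); first exact: (a (Ordinal lt)).
  by rewrite nth_default // inM0.
by rewrite negb_forall => /existsP[i hi]; exists i.
Qed.

Lemma polyR_mul s t : polyR v s -> polyR v t -> polyR v (s * t).
Proof.
move=> hs ht i; rewrite coefM; apply: inR_sum => j _; exact: inRM.
Qed.

Lemma polyR_scale c s : inR v c -> polyR v s -> polyR v (c *: s).
Proof. by move=> hc hs i; rewrite coefZ inRM. Qed.

Lemma Mcoef_mul (s t : {poly K}) : (forall i, inM s`_i) -> polyR v t -> forall i, inM (s * t)`_i.
Proof.
move=> hs ht i; rewrite coefM; apply: inM_sum => j _; exact: inMMr.
Qed.

Lemma notM_mul x y : ~~ inM x -> ~~ inM y -> inR v x -> inR v y -> ~~ inM (x * y).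
Proof.
move=> hx hy rx ry; have [x0 vx] := inR_notM rx hx; have [y0 vy] := inR_notM ry hy.
by rewrite /inM mulf_eq0 (negbTE x0) (negbTE y0) /= vM // vx vy addr0 ltxx.
Qed.

Lemma gauss s t : prim s -> prim t -> prim (s * t).
Proof.
move=> [hs es] [ht et]; split; first exact: polyR_mul.
have [i0 hi0 mi0] := ex_minnP es.
have [j0 hj0 mj0] := ex_minnP et.
exists (i0 + j0)%N; rewrite coefM.
have lt : (i0 < (i0 + j0).+1)%N by rewrite ltnS leq_addr.
rewrite (bigD1 (Ordinal lt)) //= addKn.
have [u0 vu] := inR_notM (inRM (hs i0) (ht j0)) (notM_mul hi0 hj0 (hs i0) (ht j0)).
have hM : inM (\sum_(i < (i0 + j0).+1 | i != Ordinal lt) s`_i * t`_(i0 + j0 - i)).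
  apply: inM_sum => [[j hj]]; rewrite -val_eqE /= => nj.
  have [ltj|gtj] := ltnP j i0.
    apply: inMMr; last exact: ht.
    by apply: contraT => /mi0; rewrite leqNgt ltj.
  apply: inMM; first exact: hs.
  have ltj : (i0 + j0 - j < j0)%N.
    rewrite ltnS in hj; have : (i0 < j)%N by rewrite ltn_neqAle eq_sym nj gtj.
    move=> h; lia.
  by apply: contraT => /mj0; rewrite leqNgt ltj.
have [n0 vn] := unit_addM u0 vu hM.
by rewrite /inM negb_or n0 vn ltxx.
Qed.

Lemma prim_scale s : s != 0 -> exists2 c, c != 0 & prim (c *: s).
Proof.
move=> s0; have ss : (0 < size s)%N by rewrite size_poly_gt0.
have lt : ((size s).-1 < size s)%N by rewrite prednK.
pose P := fun i : 'I_(size s) => s`_i != 0.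
have P0 : P (Ordinal lt) by rewrite /P /= -lead_coefE lead_coef_eq0.
case: (arg_minP (fun i : 'I_(size s) => v s`_i) P0) => i0 nz0 min0.
exists (s`_i0)^-1; first by rewrite invr_eq0.
split.
- move=> i; rewrite coefZ; have [->|ni] := eqVneq s`_i 0; first by rewrite mulr0 inR0.
  rewrite inRE ?mulf_neq0 ?invr_eq0 // vM ?invr_eq0 // vV //.
  have [lti|gei] := ltnP i (size s); last by move: ni; rewrite nth_default ?eqxx.
  have := min0 (Ordinal lti) ni => /= h; vlia.
- exists i0; rewrite coefZ mulVf //; exact: inM1.
Qed.

Lemma prim_neq0 s : prim s -> s != 0.
Proof. by move=> [_ [i hi]]; apply: contraNneq hi => ->; rewrite coef0 inM0. Qed.

Lemma vc_eq g h c : prim g -> prim h -> g = c *: h -> c != 0 /\ v c = 0.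
Proof.
move=> pg ph e.
have c0 : c != 0 by apply: contraTneq (prim_neq0 pg) => c0; rewrite e c0 scale0r eqxx.
split => //.
case: ph => [rh [i hi]]; case: pg => [rg [i' hi']].
have [h0 vh] := inR_notM (rh i) hi.
have [g0 vg] := inR_notM (rg i') hi'.
have e1 : g`_i = c * h`_i by rewrite e coefZ.
have e2 : g`_i' = c * h`_i' by rewrite e coefZ.
have g10 : g`_i != 0 by rewrite e1 mulf_neq0.
have h20 : h`_i' != 0 by apply: contraNneq g0; rewrite e2 => ->; rewrite mulr0.
have r1 := rg i; have r2 := rh i'.
rewrite inRE // e1 vM // in r1; rewrite inRE // in r2.
move: g0 vg; rewrite e2 => g0; rewrite vM // => vg; vlia.
Qed.

Lemma irr_K g : irredS (polyR v) g -> prim g -> (1 < size g)%N -> irreducible_poly g.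
Proof.
move=> [Sg g0 nug irr] pg sg; split => // q sq /dvdpP[r er].
have q0 : q != 0 by apply: contraNneq g0 => q0; rewrite er q0 mulr0.
have r0 : r != 0 by apply: contraNneq g0 => r0; rewrite er r0 mul0r.
have [l l0 pq] := prim_scale q0.
have rl0 : l^-1 *: r != 0 by rewrite scaler_eq0 invr_eq0 negb_or l0.
have [mu mu0 pr] := prim_scale rl0.
have eg : g = mu^-1 *: ((mu *: (l^-1 *: r)) * (l *: q)).
  rewrite er -scalerAl scalerA mulVf // scale1r -scalerAl -scalerAr scalerA mulVf //.
  by rewrite scale1r.
have [_ vmu] := vc_eq pg (gauss pr pq) eg.
have Rr : polyR v (l^-1 *: r).
  have -> : l^-1 *: r = mu^-1 *: (mu *: (l^-1 *: r)) by rewrite scalerA mulVf ?scale1r.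
  apply: polyR_scale; last by case: pr.
  by rewrite inRE ?invr_eq0 // vmu.
have eg2 : g = (l *: q) * (l^-1 *: r).
  by rewrite mulrC -scalerAl -scalerAr scalerA mulVf // scale1r er.
case: (irr _ _ (proj1 pq) Rr eg2).
  move=> /unitS_polyR[e [he e0 _]].
  by move: sq; rewrite -(size_scale q l0) he size_polyC e0.
move=> /unitS_polyR[e [he e0 _]].
rewrite er; have -> : r = (l * e)%:P.
  by rewrite polyCM mul_polyC -he scalerA mulfV ?scale1r.
rewrite eqp_sym mul_polyC; apply: eqp_scale; rewrite mulf_neq0 //.
Qed.

Lemma primitive_prim f : polyR v f -> primitiveR v f -> prim f.
Proof.
move=> Rf [c [hc sc]]; split => //; apply: not_allM_ex => hall.
have : inM (\sum_(i < size f) c i * f`_i) by apply: inM_sum => i _; exact: inMM.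
by rewrite sc; apply/negP; exact: inM1.
Qed.

Lemma divisor_prim g f : prim f -> irredS (polyR v) g -> dvdS (polyR v) g f ->
  prim g /\ (1 < size g)%N.
Proof.
move=> [Rf [i0 hi0]] [Sg g0 nug _] [h Sh e].
have pg : prim g.
  split => //; apply: not_allM_ex => hall.
  by have := Mcoef_mul hall Sh i0; rewrite -e; apply/negP.
split => //; rewrite ltnNge; apply/negP => sg.
have eg := size1_polyC sg.
case: pg => _ [i hi]; have [gi0 vgi] := inR_notM (Sg i) hi.
have i0' : i = 0%N.
  by apply: contraNeq gi0; rewrite eg coefC => /negbTE ->.
subst i; apply: nug; rewrite eg; exact: unitC_polyR.
Qed.

Lemma vprodX (I : Type) (r : seq I) (y : I -> K) (e : I -> nat) :
  \prod_(i <- r) y i ^+ e i != 0 ->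
  v (\prod_(i <- r) y i ^+ e i) = \sum_(i <- r) (e i)%:Z * v (y i).
Proof.
elim: r => [|a r IH]; first by rewrite !big_nil v1.
rewrite !big_cons mulf_eq0 negb_or => /andP[h1 h2].
rewrite vM // IH //; congr (_ + _).
case: (e a) h1 => [|q] h1; first by rewrite expr0 v1 mul0r.
rewrite vX //; apply: contraNneq h1 => ->; by rewrite expr0n /= eqxx.
Qed.

Lemma meas_lt x0 G a b : inR v x0 -> intR v a -> intR v b -> G = a * b -> G.[x0] != 0 ->
  ~ unitS (intR v) b ->
  (size a + `|v a.[x0]| < size G + `|v G.[x0]|)%N.
Proof.
move=> hx Sa Sb e nz nub.
have ab := nz; rewrite e hornerM mulf_eq0 negb_or in ab; case/andP: ab => a0 b0.
have ap : a != 0 by apply: contraNneq a0 => ->; rewrite horner0.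
have bp : b != 0 by apply: contraNneq b0 => ->; rewrite horner0.
have va : 0 <= v a.[x0] by rewrite -inRE // Sa.
have vb : 0 <= v b.[x0] by rewrite -inRE // Sb.
have vG : v G.[x0] = v a.[x0] + v b.[x0] by rewrite e hornerM vM.
have sG : size G = (size a + size b).-1 by rewrite e size_mul.
have sa : (0 < size a)%N by rewrite size_poly_gt0.
have sb : (0 < size b)%N by rewrite size_poly_gt0.
have [sb2|sb1] := ltnP 1 (size b).
  rewrite vG sG; move: va vb sb2 sa; vgen v; lia.
have eb := size1_polyC sb1.
have cR : inR v b`_0 by apply: intR_const; rewrite -eb.
have c0 : b`_0 != 0 by apply: contraNneq bp => h; rewrite eb h.
have vc : v b`_0 != 0 by apply/eqP => h; apply: nub; rewrite eb; exact: unitC_intR.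
have vbc : v b.[x0] = v b`_0 by rewrite {1}eb hornerC.
rewrite inRE // in cR.
rewrite vG sG; move: va vb vbc vc cR sb1 sb sa; vgen v; lia.
Qed.

Lemma atomic x0 G : inR v x0 -> intR v G -> G.[x0] != 0 ->
  exists u s, [/\ unitS (intR v) u, (forall r, r \in s -> irredS (intR v) r) &
     G = u * \prod_(r <- s) r].
Proof.
move=> hx; move: {2}(size G + `|v G.[x0]|)%N (leqnn (size G + `|v G.[x0]|)%N) => N.
elim: N G => [|N IH] G hN SG nz.
  have : (0 < size G)%N by rewrite size_poly_gt0; apply: contraNneq nz => ->; rewrite horner0.
  move: hN; lia.
have [uG|nuG] := Classical_Prop.classic (unitS (intR v) G).
  by exists G, [::]; split => //; rewrite big_nil mulr1.
have [iG|niG] := Classical_Prop.classic (irredS (intR v) G).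
  exists 1, [:: G]; split; first exact: unitS_intR1.
    by move=> r; rewrite inE => /eqP ->.
  by rewrite big_seq1 mul1r.
have : exists a b, [/\ intR v a, intR v b, G = a * b, ~ unitS (intR v) a & ~ unitS (intR v) b].
  apply: Classical_Prop.NNPP => hne; apply: niG; split => //.
    by apply: contraNneq nz => ->; rewrite horner0.
  move=> a b Sa Sb e.
  case: (Classical_Prop.classic (unitS (intR v) a)) => ua; first by left.
  case: (Classical_Prop.classic (unitS (intR v) b)) => ub; first by right.
  by case: hne; exists a, b.
case=> a [b [Sa Sb e nua nub]].
have ab := nz; rewrite e hornerM mulf_eq0 negb_or in ab; case/andP: ab => a0 b0.
have ma := meas_lt hx Sa Sb e nz nub.
have e' : G = b * a by rewrite mulrC.
have mb := meas_lt hx Sb Sa e' nz nua.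
have ha : (size a + `|v a.[x0]| <= N)%N by move: ma hN; lia.
have hb : (size b + `|v b.[x0]| <= N)%N by move: mb hN; lia.
have [ua [sa [ua1 sa1 ea]]] := IH a ha Sa a0.
have [ub [sb [ub1 sb1 eb]]] := IH b hb Sb b0.
exists (ua * ub), (sa ++ sb); split; first exact: unitS_intRM.
  by move=> r; rewrite mem_cat => /orP[]; [exact: sa1 | exact: sb1].
by rewrite e ea eb big_cat /=; ring.
Qed.

Lemma intR_scaled q e : (forall x, inR v x -> q.[x] != 0 -> e%:Z <= v q.[x]) ->
  intR v ((p ^+ e)^-1 *: q).
Proof.
move=> h x hx; rewrite hornerZ.
have [->|nz] := eqVneq q.[x] 0; first by rewrite mulr0 inR0.
have p0 : p ^+ e != 0 by rewrite expf_neq0 // (dvr_p_neq0 Hd).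
rewrite inRE ?mulf_neq0 ?invr_eq0 // vM ?invr_eq0 // vV // vX ?(dvr_p_neq0 Hd) //.
rewrite (dvr_vp Hd); have := h x hx nz; vgen v; lia.
Qed.

Lemma irred_unit_mul u r : unitS (intR v) u -> irredS (intR v) r -> irredS (intR v) (u * r).
Proof.
move=> /unitS_intR[e [-> e0 ve]] [Sr r0 nur irr].
have Se : intR v e%:P by apply: intRC; rewrite inRE // ve.
have Sei : intR v e^-1%:P by apply: intRC; rewrite inRE ?invr_eq0 // vV // ve.
have uei : unitS (intR v) e^-1%:P by apply: unitC_intR; rewrite ?invr_eq0 // vV // ve.
have ee : forall q, e^-1%:P * (e%:P * q) = q.
  by move=> q; rewrite mulrA -polyCM mulVf // mul1r.
split.
- exact: intRM.
- by rewrite mulf_neq0 // polyC_eq0.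
- by move=> h; apply: nur; rewrite -(ee r); exact: unitS_intRM.
move=> a b Sa Sb eab.
have : r = (e^-1%:P * a) * b by rewrite -mulrA -eab ee.
case/(irr _ _ (intRM Sei Sa) Sb) => h; [left|by right].
have -> : a = e%:P * (e^-1%:P * a) by rewrite mulrA -polyCM mulfV // mul1r.
by apply: unitS_intRM => //; exact: unitC_intR.
Qed.

Lemma allF (F : {poly K}) (s : seq {poly K}) :
  (forall r, r \in s -> exists u, unitS (intR v) u /\ r = u * F) ->
  exists u, unitS (intR v) u /\ \prod_(r <- s) r = u * F ^+ size s.
Proof.
elim: s => [|a s IH] h; first by exists 1; rewrite big_nil mul1r expr0; split => //; exact: unitS_intR1.
have [u [uu eu]] : exists u, unitS (intR v) u /\ \prod_(r <- s) r = u * F ^+ size s.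
  by apply: IH => r rs; apply: h; rewrite inE rs orbT.
have [u' [uu' eu']] := h a (mem_head _ _).
exists (u' * u); split; first exact: unitS_intRM.
by rewrite big_cons eu eu' /= exprS; ring.
Qed.

Lemma unit_cancel (F u r : {poly K}) : unitS (intR v) u ->
  (exists u', unitS (intR v) u' /\ u * r = u' * F) ->
  exists u'', unitS (intR v) u'' /\ r = u'' * F.
Proof.
move=> /unitS_intR[e [-> e0 ve]] [u' [uu' eu']].
exists (e^-1%:P * u'); split.
  by apply: unitS_intRM => //; apply: unitC_intR; rewrite ?invr_eq0 // vV // ve.
by rewrite -mulrA -eu' mulrA -polyCM mulVf // mul1r.
Qed.

Variables (f : {poly K}) (k : nat) (P : 'I_k -> {poly K}) (m : 'I_k -> nat) (n : nat).
Hypotheses (Rf : polyR v f) (pf : primitiveR v f) (sf : (1 < size f)%N)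
  (HP : irr_divisor_set v P f) (ef : f = \prod_(i < k) P i ^+ m i)
  (fdv : fd_val v f n) (n0 : (0 < n)%N).

Lemma primf : prim f. Proof. exact: primitive_prim. Qed.

Lemma Pprim i : prim (P i) /\ (1 < size (P i))%N.
Proof. case: HP => h _ _; case: (h i) => hi hd; exact: divisor_prim primf hi hd. Qed.

Lemma PR i : polyR v (P i).
Proof. by case: HP => h _ _; case: (h i) => [[]]. Qed.

Lemma PirrK i : irreducible_poly (P i).
Proof. case: HP => h _ _; have [hi _] := h i; have [pi si] := Pprim i; exact: irr_K. Qed.

Lemma Pinj i j : P i %| P j -> i = j.
Proof.
move=> d; have eq : P i %= P j.
  case: (PirrK j) => _ h; apply: h => //; have [_ si] := Pprim i.
  by rewrite neq_ltn si orbT.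
case/eqpP: eq => [[c1 c2]] /= /andP[c10 c20] e.
have e2 : P i = (c2 / c1) *: P j.
  have -> : P i = c1^-1 *: (c1 *: P i) by rewrite scalerA mulVf ?scale1r.
  by rewrite e scalerA mulrC.
have [cn vc] := vc_eq (Pprim i).1 (Pprim j).1 e2.
case: HP => _ hinj _; apply: hinj; exists (c2/c1)%:P; first exact: unitC_polyR.
by rewrite mul_polyC.
Qed.

Lemma fpw : f = pw P m. Proof. by rewrite ef. Qed.

Lemma m_pos i : (0 < m i)%N.
Proof.
case: HP => h _ _; case: (h i) => _ [g Sg eg].
have : P i %| pw P m by rewrite -fpw eg dvdp_mulr.
by rewrite /pw; case/(irr_dvd_prod (PirrK i)) => j _ [mj /Pinj ij]; rewrite ij.
Qed.

Lemma horner_pw x a : (pw P a).[x] = \prod_(i < k) (P i).[x] ^+ a i.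
Proof. by rewrite /pw horner_prod; apply: eq_bigr => i _; rewrite horner_exp. Qed.

Lemma vpw x a : (pw P a).[x] != 0 -> v (pw P a).[x] = \sum_i (a i)%:Z * v (P i).[x].
Proof. by rewrite horner_pw => h; rewrite vprodX. Qed.

Lemma pw_nz x a i : (pw P a).[x] != 0 -> (0 < a i)%N -> (P i).[x] != 0.
Proof.
rewrite horner_pw => /prodf_neq0 h ai; have := h i isT.
by rewrite expf_eq0 ai.
Qed.

Lemma VR x i : inR v x -> (P i).[x] != 0 -> 0 <= v (P i).[x].
Proof. by move=> hx h; rewrite -inRE //; apply: polyR_horner => //; exact: PR. Qed.

Lemma key (u : 'I_k -> int) (c : int) (i : nat) (a : 'I_k -> nat) :
  0 <= c -> (n.+1)%:Z * c <= i%:Z -> (forall g, - u g <= c * (m g)%:Z) ->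
  (forall g, (a g)%:Z = i%:Z * (m g)%:Z + u g) ->
  (forall x, fd_witness v f n x -> \sum_g u g * v (P g).[x] = 0) ->
  forall x, inR v x -> (pw P a).[x] != 0 -> (n * i)%:Z <= v (pw P a).[x].
Proof.
move=> c0 ci hu ha hw x hx nz; rewrite vpw //.
have [fx0|fx0] := eqVneq f.[x] 0.
  move: fx0; rewrite fpw horner_pw => /eqP /prodf_eq0 [g _].
  rewrite expf_eq0 => /andP[mg /eqP Pg].
  have ag : a g = 0%N.
    apply/eqP; rewrite eqn0Ngt; apply/negP => ag.
    by have := pw_nz nz ag; rewrite Pg eqxx.
  have := ha g; rewrite ag => hag; have := hu g; have := m_pos g.
  move=> mg' hug; have i0 : i = 0%N by nia.
  rewrite i0 muln0; apply: sumr_ge0 => j _.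
  have [aj|aj] := posnP (a j); first by rewrite aj mul0r.
  by apply: mulr_ge0 => //; apply: VR => //; exact: pw_nz aj.
have Pnz g : (P g).[x] != 0.
  by apply: pw_nz (m_pos g); rewrite -fpw.
have eN : v f.[x] = \sum_g (m g)%:Z * v (P g).[x] by rewrite fpw vpw // -fpw.
have Nge : n%:Z <= v f.[x] by case: fdv => _ h; exact: h.
have split1 : \sum_g (a g)%:Z * v (P g).[x] =
   i%:Z * v f.[x] + \sum_g u g * v (P g).[x].
  rewrite eN mulr_sumr -big_split /=; apply: eq_bigr => g _; rewrite ha /=; ring.
rewrite split1.
have [eqN|neN] := eqVneq (v f.[x]) n%:Z.
  rewrite hw; last by split => //; split.
  rewrite eqN addr0; lia.
have Nge1 : (n.+1)%:Z <= v f.[x] by move: Nge neN; lia.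
have lowu : - c * v f.[x] <= \sum_g u g * v (P g).[x].
  rewrite eN mulr_sumr; apply: ler_sum => g _.
  have := hu g; have := VR hx (Pnz g); nia.
move: lowu Nge1 ci c0; set N := v f.[x]; set S := \sum_g _; nia.
Qed.

Lemma core (w : 'I_k -> int) (j : nat) :
  (exists g, w g != 0) ->
  (forall x, fd_witness v f n x -> \sum_g w g * v (P g).[x] = 0) ->
  fdk_bound n w m <= j%:Z ->
  exists t, factorizationS (intR v) (((p ^+ n)^-1 *: f) ^+ j) t /\
    exists2 x, x \in t & ~ (exists u, unitS (intR v) u /\ x = u * ((p ^+ n)^-1 *: f)).
Proof.
move=> [g0 wg0] hw hj.
set F := (p ^+ n)^-1 *: f.
set cp := Num.ceil (sup_norm (vpos_div w m)).
set cn := Num.ceil (sup_norm (vneg_div w m)).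
have cp0 : 0 <= cp := ceil_sup_ge0 _.
have cn0 : 0 <= cn := ceil_sup_ge0 _.
have hcp g : w g <= cp * (m g)%:Z.
  have := ceil_bound (fun i => Num.max (w i) 0) (m_pos g).
  by rewrite ge_max => /andP[].
have hcn g : - w g <= cn * (m g)%:Z.
  have := ceil_bound (fun i => Num.max (- w i) 0) (m_pos g).
  by rewrite ge_max => /andP[].
have hj' : (n.+1)%:Z * (cp + cn) <= j%:Z by [].
pose i := (n.+1 * `|cn|)%N.
have icn : i%:Z = (n.+1)%:Z * cn by rewrite /i PoszM gez0_abs.
have ij : (i <= j)%N by move: hj' icn cp0; lia.
pose a g := absz (i%:Z * (m g)%:Z + w g).
pose i2 := (j - i)%N.
pose b g := absz (i2%:Z * (m g)%:Z - w g)%R.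
have ha g : (a g)%:Z = i%:Z * (m g)%:Z + w g.
  rewrite /a gez0_abs //; have := hcn g; have := m_pos g; move: icn cn0; nia.
have hb g : (b g)%:Z = i2%:Z * (m g)%:Z - w g.
  rewrite /b gez0_abs //; have := hcp g; have := m_pos g; move: icn cn0 hj' cp0 ij; nia.
have hi2 : (n.+1)%:Z * cp <= i2%:Z by rewrite /i2; move: hj' icn ij cn0 cp0; lia.
have icn' : (n.+1)%:Z * cn <= i%:Z by rewrite icn.
have keyA := key cn0 icn' hcn ha hw.
have hcp' g : - (- w g) <= cp * (m g)%:Z by rewrite opprK.
have hb' g : (b g)%:Z = i2%:Z * (m g)%:Z + - w g by rewrite hb.
have hwN x : fd_witness v f n x -> \sum_g - w g * v (P g).[x] = 0.
  by move=> hx; under eq_bigr do rewrite mulNr; rewrite sumrN hw ?oppr0.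
have keyB := key cp0 hi2 hcp' hb' hwN.
set A := (p ^+ (n * i))^-1 *: pw P a.
set B := (p ^+ (n * i2))^-1 *: pw P b.
have SA : intR v A := intR_scaled keyA.
have SB : intR v B := intR_scaled keyB.
have p0 : p != 0 := dvr_p_neq0 Hd.
have eAB : A * B = F ^+ j.
  rewrite /A /B /F -scalerAl -scalerAr scalerA pw_mul exprZn; congr (_ *: _).
    rewrite -invfM -exprD exprVn -exprM; congr ((_ ^+ _)^-1).
    by rewrite -mulnDr /i2 subnKC.
  rewrite fpw pw_exp; apply: pw_ext => g; apply/eqP; rewrite -eqz_nat PoszD ha hb PoszM.
  apply/eqP; have e : (i2 + i)%N = j by rewrite /i2 subnK.
  by rewrite -e PoszD; ring.
case: (fdv) => [[x0 hx0 [fx0 vfx0]] _].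
have Fj0 : (F ^+ j).[x0] != 0.
  by rewrite horner_exp hornerZ expf_neq0 // mulf_neq0 // invr_eq0 expf_neq0.
have A0 : A.[x0] != 0 by move: Fj0; rewrite -eAB hornerM mulf_eq0 negb_or => /andP[].
have B0 : B.[x0] != 0 by move: Fj0; rewrite -eAB hornerM mulf_eq0 negb_or => /andP[].
have [uA [sA [uA1 sA1 eA]]] := atomic hx0 SA A0.
have [uB [sB [uB1 sB1 eB]]] := atomic hx0 SB B0.
have good : ~ exists u l, unitS (intR v) u /\ A = u * F ^+ l.
  move=> [u [l [/unitS_intR[e [eu e0 ve]] eAl]]].
  pose ml g := (m g * l)%N.
  have eq : pw P a = (p ^+ (n * i) * (e * (p ^+ n)^-1 ^+ l)) *: pw P ml.
    have -> : pw P a = p ^+ (n * i) *: A by rewrite /A scalerA mulfV ?scale1r // expf_neq0.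
    by rewrite eAl eu /F exprZn fpw pw_exp mul_polyC scalerA scalerA mulrA.
  have c0 : p ^+ (n * i) * (e * (p ^+ n)^-1 ^+ l) != 0.
    by rewrite !mulf_neq0 // ?expf_neq0 // invr_eq0 expf_neq0.
  have hml := uf PirrK Pinj c0 eq.
  have hwi g : w g = (l%:Z - i%:Z) * (m g)%:Z.
    have := hml g; rewrite /ml => h; have := ha g; rewrite h PoszM => h'.
    by rewrite -[w g](addKr (i%:Z * (m g)%:Z)) -h'; ring.
  have wit : fd_witness v f n x0 by [].
  have Pnz g : (P g).[x0] != 0 by apply: pw_nz (m_pos g); rewrite -fpw.
  have eN : v f.[x0] = \sum_g (m g)%:Z * v (P g).[x0] by rewrite fpw vpw // -fpw.
  have := hw x0 wit.
  have -> : \sum_g w g * v (P g).[x0] = (l%:Z - i%:Z) * v f.[x0].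
    by rewrite eN mulr_sumr; apply: eq_bigr => g _; rewrite hwi mulrA.
  rewrite vfx0 => /eqP; rewrite mulf_eq0 => /orP[/eqP li|]; last by rewrite eqz_nat; case: (n) n0.
  by move: wg0; rewrite hwi li mul0r eqxx.
have [r0 r0in nr0] : exists2 r0, r0 \in sA & ~ (exists u, unitS (intR v) u /\ r0 = u * F).
  apply: NNPP => H; apply: good.
  have hall : forall r, r \in sA -> exists u, unitS (intR v) u /\ r = u * F.
    by move=> r rin; apply: NNPP => hr; apply: H; exists r.
  have [u [uu eu]] := allF hall.
  exists (uA * u), (size sA); split; first exact: unitS_intRM.
  by rewrite eA eu mulrA.
exists ((uA * uB * r0) :: (rem r0 sA ++ sB)); split; last first.
  exists (uA * uB * r0); first exact: mem_head.
  move=> h; apply: nr0; apply: (unit_cancel (u:=uA*uB)) => //; exact: unitS_intRM.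
split.
  move=> r; rewrite inE => /orP[/eqP ->|].
    by apply: irred_unit_mul; [exact: unitS_intRM | exact: sA1].
  by rewrite mem_cat => /orP[/mem_rem|]; [exact: sA1 | exact: sB1].
have eS : \prod_(r <- sA) r = r0 * \prod_(r <- rem r0 sA) r.
  by rewrite [LHS](perm_big (r0 :: rem r0 sA)) ?perm_to_rem // big_cons.
rewrite big_cons big_cat /= -eAB eA eB eS; ring.
Qed.

Lemma fdk_int (w : 'I_k -> int) : in_fdk v f n P (fun i => (w i)%:~R) ->
  forall x, fd_witness v f n x -> \sum_g w g * v (P g).[x] = 0.
Proof.
move=> h x hx; apply/eqP; rewrite -(@intr_eq0 rat) rmorph_sum /=; apply/eqP.
rewrite (eq_bigr (fun g => (w g)%:~R * (v (P g).[x])%:~R)) ?h // => g _.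
exact: intrM.
Qed.

Lemma prod_nseq (F : {poly K}) j : \prod_(r <- nseq j F) r = F ^+ j.
Proof. by elim: j => [|q IH]; rewrite ?big_nil ?expr0 // big_cons IH exprS. Qed.

Lemma main_stmt : let F := (p ^+ n)^-1 *: f in
  ((exists u : 'I_k -> rat, in_fdk v f n P u /\ exists i, u i != 0) ->
      ~ abs_irredS (intR v) F) /\
  (forall w : 'I_k -> int, (exists i, w i != 0) ->
      in_fdk v f n P (fun i => (w i)%:~R) ->
      irredS (intR v) F ->
      forall j : nat, fdk_bound n w m <= j%:Z ->
        factors_nonuniquely (intR v) (F ^+ j)).
Proof.
move=> F; split.
  move=> [u [hu [g ug]]] [irrF absF].
  pose D := \prod_(l < k) denq (u l).
  pose w i := numq (u i) * \prod_(l < k | l != i) denq (u l).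
  have hwD i : ((w i)%:~R : rat) = u i * D%:~R.
    rewrite /w /D [X in _ = _ * X%:~R](bigD1 i) //= !intrM.
    have ed : u i * (denq (u i))%:~R = (numq (u i))%:~R.
      by rewrite -{1}(divq_num_den (u i)) mulfVK // intr_eq0 denq_neq0.
    by rewrite mulrA ed.
  have D0 : (D%:~R : rat) != 0.
    by rewrite intr_eq0 /D; apply/prodf_neq0 => l _; exact: denq_neq0.
  have wg : w g != 0.
    by rewrite -(@intr_eq0 rat) hwD mulf_neq0.
  have hw : forall x, fd_witness v f n x -> \sum_g w g * v (P g).[x] = 0.
    move=> x hx; apply/eqP; rewrite -(@intr_eq0 rat) rmorph_sum /=.
    under eq_bigr do rewrite intrM hwD mulrAC.
    by rewrite -mulr_suml hu // mul0r.
  pose j := `|fdk_bound n w m|%N.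
  have hj : fdk_bound n w m <= j%:Z by rewrite /j abszE ler_norm.
  have [t [[tirr tprod] [x xt nx]]] := core (ex_intro _ g wg) hw hj.
  have [sz [t' [pt h]]] := absF j t (conj tirr tprod).
  have ix : (index x t < size t)%N by rewrite index_mem.
  have := h _ ix; rewrite nth_index //.
  have : nth 0 t' (index x t) \in nseq j F.
    by rewrite (perm_mem pt) mem_nth // -(perm_size pt) -sz.
  rewrite mem_nseq => /andP[_ /eqP ->] [u' uu' ex].
  by apply: nx; exists u'.
move=> w hw0 hfdk irrF j hj.
have [t [ft [x xt nx]]] := core hw0 (fdk_int hfdk) hj.
exists (nseq j F), t; split => //.
  split; last exact: prod_nseq.
  by move=> r; rewrite mem_nseq => /andP[_ /eqP ->].
move=> [sz [t' [pt h]]].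
have xt' : x \in t' by rewrite -(perm_mem pt).
have ix : (index x t' < size (nseq j F))%N by rewrite sz (perm_size pt) index_mem.
have := h _ ix; rewrite nth_index // nth_nseq -(size_nseq j F) ix => -[u uu eF].
apply: nx; apply: (unit_cancel uu); exists 1; split; first exact: unitS_intR1.
by rewrite -eF mul1r.
Qed.

End Val.

Theorem theorem1 (K : fieldType) (v : K -> int) (p : K) (Hdvr : is_dvr v p)
  (f : {poly K}) (k : nat) (P : 'I_k -> {poly K}) (m : 'I_k -> nat) (n : nat) :
  polyR v f -> primitiveR v f -> (1 < size f)%N ->
  irr_divisor_set v P f -> f = \prod_(i < k) P i ^+ m i ->
  fd_val v f n -> (0 < n)%N ->
  let F := (p ^+ n)^-1 *: f in
  ((exists u : 'I_k -> rat, in_fdk v f n P u /\ exists i, u i != 0) ->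
      ~ abs_irredS (intR v) F) /\
  (forall w : 'I_k -> int, (exists i, w i != 0) ->
      in_fdk v f n P (fun i => (w i)%:~R) ->
      irredS (intR v) F ->
      forall j : nat, fdk_bound n w m <= j%:Z ->
        factors_nonuniquely (intR v) (F ^+ j)).
Proof.
move=> Rf pf sf HP ef fdv n0.
exact: (main_stmt Hdvr Rf pf sf HP ef fdv n0).
Qed.
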